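(* For every integer $n\geq 3$, there is a partition of $\mathbb{R}^n$ into $2^{\aleph_0}$ pairwise disjoint subsets, each of which is arcwise connected and dense in $\mathbb{R}^n$.
   Context: $\mathbb{R}^n$ carries its usual Euclidean topology. *)

(* Defs.v *)
From mathcomp Require Import all_boot.
From Stdlib Require Import Reals.
Open Scope R_scope.

Definition Rn (n : nat) : Type := 'I_n -> R.

Definition edist {n : nat} (x y : Rn n) : R :=
  sqrt (\big[Rplus/R0]_(i < n) (Rmult (Rminus (x i) (y i)) (Rminus (x i) (y i)))).

Definition pt_eq {n : nat} (x y : Rn n) : Prop := forall i : 'I_n, x i = y i.

Definition continuous_on_01 {n : nat} (f : R -> Rn n) : Prop :=
  forall t : R, (0 <= t <= 1)%R ->
  forall eps : R, (0 < eps)%R ->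
  exists delta : R, (0 < delta)%R /\
    forall s : R, (0 <= s <= 1)%R -> (Rabs (s - t) < delta)%R ->
      (edist (f s) (f t) < eps)%R.

(* An arc in A from x to y: a continuous injective map [0,1] -> R^n
   (a homeomorphism onto its image, since [0,1] is compact), with f 0 = x,
   f 1 = y, and image contained in A. *)
Definition is_arc_in {n : nat} (A : Rn n -> Prop) (x y : Rn n) (f : R -> Rn n) : Prop :=
  continuous_on_01 f /\
  (forall s t : R, (0 <= s <= 1)%R -> (0 <= t <= 1)%R -> pt_eq (f s) (f t) -> s = t) /\
  pt_eq (f 0%R) x /\ pt_eq (f 1%R) y /\
  (forall t : R, (0 <= t <= 1)%R -> A (f t)).

Definition arcwise_connected {n : nat} (A : Rn n -> Prop) : Prop :=
  (exists x, A x) /\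
  forall x y : Rn n, A x -> A y -> ~ pt_eq x y ->
    exists f : R -> Rn n, is_arc_in A x y f.

Definition dense {n : nat} (A : Rn n -> Prop) : Prop :=
  forall (x : Rn n) (eps : R), (0 < eps)%R -> exists y, A y /\ (edist x y < eps)%R.

(* Main.v *)
Require Import Defs.
From mathcomp Require Import all_boot.
From Stdlib Require Import Reals Lra Lia Psatz ZArith Classical ClassicalEpsilon FunctionalExtensionality.
Open Scope R_scope.

Lemma abs_sin_le x : Rabs (sin x) <= Rabs x.
Proof.
have Hb := SIN_bound x. have HP := PI2_3_2.
destruct (Rle_lt_dec 1 (Rabs x)) as [H1|H1].
{ apply Rle_trans with 1; [apply Rabs_le; lra| exact H1]. }
apply Rabs_def2 in H1. destruct H1 as [H1 H2].
destruct (Rtotal_order x 0) as [H|[H|H]].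
- have h := sin_lt_x (- x) ltac:(lra). rewrite sin_neg in h.
  have h2 : sin x < 0 by apply sin_lt_0_var; lra.
  rewrite (Rabs_left x H) (Rabs_left _ h2). lra.
- subst. rewrite sin_0 Rabs_R0. lra.
- have h := sin_lt_x x H.
  have h2 : 0 <= sin x by left; apply sin_gt_0; lra.
  rewrite (Rabs_right (sin x)); [|lra]. rewrite (Rabs_right x); lra.
Qed.

Lemma sin_lip p q : Rabs (sin p - sin q) <= Rabs (p - q).
Proof.
rewrite form4 !Rabs_mult.
have h1 := abs_sin_le ((p - q)/2).
have h2 : Rabs (cos ((p + q) / 2)) <= 1.
{ have := COS_bound ((p+q)/2). intros [? ?]. apply Rabs_le. lra. }
rewrite (Rabs_right 2); [|lra].
have h3 : Rabs ((p - q) / 2) = Rabs (p - q) / 2.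
{ unfold Rdiv. rewrite Rabs_mult Rabs_inv (Rabs_right 2); [reflexivity|lra]. }
rewrite h3 in h1.
have := Rabs_pos (cos ((p + q) / 2)). have := Rabs_pos (sin ((p - q) / 2)).
nra.
Qed.

Lemma sum_nonneg n (c : 'I_n -> R) : (forall i, 0 <= c i) -> 0 <= \big[Rplus/R0]_(i < n) c i.
Proof.
move=> H. apply: (big_ind (fun x => 0 <= x)) => //; [lra| move=> x y; lra].
Qed.

Lemma sum_le_scale n (a c : 'I_n -> R) (k : R) :
  (forall i, a i <= k * c i) ->
  \big[Rplus/R0]_(i < n) a i <= k * \big[Rplus/R0]_(i < n) c i.
Proof.
move=> H. apply: (big_ind2 (fun x y => x <= k * y)) => //.
- lra.
- move=> x1 x2 y1 y2 h1 h2. lra.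
Qed.

Lemma cont_crit n (g : R -> Rn n) (c : 'I_n -> R) :
  (forall i, 0 <= c i) ->
  (forall s t i, Rsqr (g s i - g t i) <= Rsqr (s - t) * c i) ->
  continuous_on_01 g.
Proof.
move=> Hc Hg t _ eps Heps.
set C := \big[Rplus/R0]_(i < n) c i.
have HC : 0 <= C by apply: sum_nonneg.
exists (eps / (C + 1)). split.
{ apply Rdiv_lt_0_compat; lra. }
move=> s _ Hst.
have Hsum : \big[Rplus/R0]_(i < n) ((g s i - g t i) * (g s i - g t i)) <= Rsqr (s - t) * C.
{ apply: sum_le_scale => i. exact: Hg. }
have Hd : Rsqr (s - t) * C < eps * eps.
{ have h0 : 0 <= Rabs (s - t) by apply Rabs_pos.
  rewrite Rsqr_abs. unfold Rsqr.
  have h1 : Rabs (s - t) * (C + 1) < eps.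
  { have := Rmult_lt_compat_r (C+1) _ _ ltac:(lra) Hst.
    unfold Rdiv. rewrite Rmult_assoc Rinv_l; lra. }
  have h2 : Rabs (s - t) < eps by nra.
  have h3 : Rabs (s - t) * C < eps by nra.
  have h4 : 0 <= Rabs (s - t) * C by nra.
  nra. }
unfold edist.
apply Rle_lt_trans with (sqrt (Rsqr (s - t) * C)).
{ apply sqrt_le_1_alt. exact Hsum. }
rewrite -(sqrt_Rsqr eps); [|lra].
apply sqrt_lt_1_alt. split; [|exact Hd].
apply Rmult_le_pos; [apply Rle_0_sqr|exact HC].
Qed.


Lemma pt_eq_eq {n} (p q : Rn n) : pt_eq p q -> p = q.
Proof. move=> H. apply: functional_extensionality. exact: H. Qed.

Definition concat {n} (g1 g2 : R -> Rn n) (t : R) : Rn n :=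
  if Rle_dec t (1/2) then g1 (2*t) else g2 (2*t-1).

Lemma concat_arc {n} (S : Rn n -> Prop) x y z g1 g2 :
  is_arc_in S x y g1 -> is_arc_in S y z g2 ->
  (forall s t, 0<=s<=1 -> 0<=t<=1 -> pt_eq (g1 s) (g2 t) -> s = 1) ->
  is_arc_in S x z (concat g1 g2).
Proof.
move=> [c1 [i1 [e10 [e11 s1]]]] [c2 [i2 [e20 [e21 s2]]]] Hd.
have E : g1 1 = g2 0.
{ apply: pt_eq_eq => i. by rewrite e11 e20. }
split; [|split; [|split; [|split]]].
- move=> t Ht eps Heps. unfold concat.
  destruct (Rtotal_order t (1/2)) as [Hl|[He|Hg]].
  + have [d1 [Hd1 Hd1']] := c1 (2*t) ltac:(lra) eps Heps.
    exists (Rmin (d1/2) (1/2 - t)). split.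
    { apply Rmin_pos; lra. }
    move=> s Hs Hst. have hm1 := Rmin_l (d1/2) (1/2 - t).
    have hm2 := Rmin_r (d1/2) (1/2 - t).
    have Hst' := Rabs_def2 _ _ Hst.
    destruct (Rle_dec s (1/2)); [|lra]. destruct (Rle_dec t (1/2)); [|lra].
    apply: Hd1'. lra. apply Rabs_def1; lra.
  + subst t.
    have [d1 [Hd1 Hd1']] := c1 1 ltac:(lra) eps Heps.
    have [d2 [Hd2 Hd2']] := c2 0 ltac:(lra) eps Heps.
    exists (Rmin d1 d2 / 2). split.
    { have := Rmin_pos _ _ Hd1 Hd2. lra. }
    move=> s Hs Hst. have hm1 := Rmin_l d1 d2. have hm2 := Rmin_r d1 d2.
    have Hst' := Rabs_def2 _ _ Hst.
    destruct (Rle_dec (1/2) (1/2)); [|lra].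
    replace (2 * (1/2)) with 1 by lra.
    destruct (Rle_dec s (1/2)).
    * apply: Hd1'. lra. apply Rabs_def1; lra.
    * rewrite E. apply: Hd2'. lra. apply Rabs_def1; lra.
  + have [d2 [Hd2 Hd2']] := c2 (2*t-1) ltac:(lra) eps Heps.
    exists (Rmin (d2/2) (t - 1/2)). split.
    { apply Rmin_pos; lra. }
    move=> s Hs Hst. have hm1 := Rmin_l (d2/2) (t - 1/2).
    have hm2 := Rmin_r (d2/2) (t - 1/2).
    have Hst' := Rabs_def2 _ _ Hst.
    destruct (Rle_dec s (1/2)); [lra|]. destruct (Rle_dec t (1/2)); [lra|].
    apply: Hd2'. lra. apply Rabs_def1; lra.
- move=> s t Hs Ht. unfold concat.
  destruct (Rle_dec s (1/2)) as [a1|a1]; destruct (Rle_dec t (1/2)) as [a2|a2];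
  try apply Rnot_le_lt in a1; try apply Rnot_le_lt in a2; simpl.
  + move=> H. have := i1 (2*s) (2*t) ltac:(lra) ltac:(lra) H. lra.
  + move=> H. have hs := Hd (2*s) (2*t-1) ltac:(lra) ltac:(lra) H.
    have H' : pt_eq (g2 0) (g2 (2*t-1)).
    { move=> i. rewrite -E. have -> : g1 1 = g1 (2*s) by f_equal; lra. exact: H. }
    have := i2 0 (2*t-1) ltac:(lra) ltac:(lra) H'. lra.
  + move=> H. have hs := Hd (2*t) (2*s-1) ltac:(lra) ltac:(lra) (fun i => esym (H i)).
    have H' : pt_eq (g2 0) (g2 (2*s-1)).
    { move=> i. rewrite -E. have -> : g1 1 = g1 (2*t) by f_equal; lra. by rewrite H. }
    have := i2 0 (2*s-1) ltac:(lra) ltac:(lra) H'. lra.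
  + move=> H. have := i2 (2*s-1) (2*t-1) ltac:(lra) ltac:(lra) H. lra.
- move=> i. unfold concat. destruct (Rle_dec 0 (1/2)); [|lra].
  rewrite Rmult_0_r. exact: e10.
- move=> i. unfold concat. destruct (Rle_dec 1 (1/2)); [lra|].
  replace (2*1-1) with 1 by lra. exact: e21.
- move=> t Ht. unfold concat. destruct (Rle_dec t (1/2)).
  + apply: s1. lra.
  + apply: s2. lra.
Qed.


Lemma Rabs_div' a b : Rabs (a / b) = Rabs a / Rabs b.
Proof. unfold Rdiv. by rewrite Rabs_mult Rabs_inv. Qed.

Definition isodd (z : R) := exists k : Z, z = IZR (2*k+1).

Definition lvl (v : R) : nat :=
  match excluded_middle_informative (exists m : nat, isodd (v * pow 2 m)) with
  | left H => proj1_sig (constructive_indefinite_description _ H)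
  | right _ => 0%nat
  end.

Definition Hv (v : R) : R := pow 2 (lvl v).

Definition ff (u v : R) : R := Hv v * sin (Hv v * u).

Lemma Hv_ge1 v : 1 <= Hv v.
Proof. unfold Hv. rewrite -(pow_O 2). apply Rle_pow; [lra|lia]. Qed.

Lemma lvl_ge v m : isodd (v * pow 2 m) -> (m <= lvl v)%coq_nat.
Proof.
move=> Hm. unfold lvl.
destruct (excluded_middle_informative _) as [H|H]; last first.
{ exfalso; apply H; exists m; exact Hm. }
destruct (constructive_indefinite_description _ H) as [m' Hm']. simpl.
destruct (Nat.le_gt_cases m m') as [|Hlt]; [assumption|exfalso].
destruct Hm as [k Hk]. destruct Hm' as [k' Hk'].
destruct (Nat.le_exists_sub (S m') m ltac:(lia)) as [e [He _]].
have E : v * pow 2 m = v * pow 2 m' * 2 * pow 2 e.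
{ rewrite He pow_add. simpl. ring. }
rewrite Hk Hk' in E.
rewrite pow_IZR -!mult_IZR in E.
apply eq_IZR in E.
set w := (2 ^ Z.of_nat e)%Z in E. lia.
Qed.

Lemma pow2_big (B : R) : exists m : nat, B < pow 2 m.
Proof.
have [N HN] := Pow_x_infinity 2 ltac:(rewrite Rabs_right; lra) (B + 1).
exists N. have := HN N (le_n _). rewrite Rabs_right; [lra|].
apply Rle_ge, pow_le. lra.
Qed.

Lemma dyadic_near (x : R) (d B : R) : 0 < d ->
  exists v, Rabs (v - x) < d /\ B <= Hv v.
Proof.
move=> Hd.
have [m Hm] := pow2_big (Rmax B (/ d)).
have hM := Rmax_l B (/ d). have hM' := Rmax_r B (/ d).
have P := pow_lt 2 m ltac:(lra).
set M := pow 2 m in Hm P *.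
set k := (up (x * M / 2) - 1)%Z.
have [A1 A2] := archimed (x * M / 2).
exists (IZR (2*k+1) / M). split.
- have Hk : IZR (2*k+1) = 2 * IZR (up (x * M / 2)) - 1.
  { rewrite /k plus_IZR mult_IZR minus_IZR. simpl. ring. }
  have E : IZR (2*k+1) / M - x = (IZR (2*k+1) - x * M) / M.
  { field. apply Rgt_not_eq; lra. }
  rewrite E Rabs_div'.
  rewrite (Rabs_right M); last lra.
  apply Rmult_lt_reg_r with M; first lra.
  unfold Rdiv. rewrite Rmult_assoc Rinv_l; last lra. rewrite Rmult_1_r.
  have h1 : Rabs (IZR (2 * k + 1) - x * M) <= 1.
  { apply Rabs_le. rewrite Hk. lra. }
  have h2 : 1 < d * M.
  { have := Rmult_lt_compat_l d _ _ Hd (Rle_lt_trans _ _ _ hM' Hm).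
    rewrite Rinv_r; lra. }
  lra.
- have Hodd : isodd (IZR (2*k+1) / M * pow 2 m).
  { exists k. rewrite /M. field. apply pow_nonzero; lra. }
  have := lvl_ge _ _ Hodd. move=> Hle.
  apply Rle_trans with M; first lra.
  unfold Hv. apply Rle_pow; [lra|exact Hle].
Qed.

Lemma sin_periodZ x (k : Z) : sin (x + 2 * IZR k * PI) = sin x.
Proof.
destruct (Z_le_gt_dec 0 k) as [Hk|Hk].
- rewrite -(Z2Nat.id k Hk) -INR_IZR_INZ. apply sin_period.
- have E : k = (- Z.of_nat (Z.to_nat (- k)))%Z by lia.
  rewrite E opp_IZR -INR_IZR_INZ.
  rewrite -(sin_period (x + 2 * - INR (Z.to_nat (- k)) * PI) (Z.to_nat (-k))).
  f_equal. ring.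
Qed.

Lemma hit (H t x : R) : 1 <= H -> Rabs t <= H ->
  exists u, Rabs (u - x) <= 14 / H /\ H * sin (H * u) = t.
Proof.
move=> H1 Ht. have HP := PI2_3_2. have HP4 := PI_4.
have [k [A1 A2]] : exists k, IZR k > H * x / (2 * PI) /\ IZR k - H * x / (2 * PI) <= 1
  := ex_intro _ _ (archimed _).
have B1 : H * x < 2 * PI * IZR k.
{ have := Rmult_lt_compat_l (2*PI) _ _ ltac:(lra) A1.
  have -> : 2 * PI * (H * x / (2 * PI)) = H * x. field; apply Rgt_not_eq; lra. lra. }
have B2 : 2 * PI * IZR k <= H * x + 2 * PI.
{ have := Rmult_le_compat_l (2*PI) _ _ ltac:(lra) A2.
  have -> : 2 * PI * (IZR k - H * x / (2 * PI))
     = 2 * PI * IZR k - H * x by field; apply Rgt_not_eq; lra. lra. }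
set g := fun w => H * sin w - t.
have Hg : continuity g.
{ rewrite /g. apply continuity_minus; [|apply continuity_const; by move=> ? ?].
  apply continuity_mult; [apply continuity_const; by move=> ? ?|apply continuity_sin]. }
set w1 := PI / 2 + 2 * IZR k * PI.
set w2 := 3 * (PI / 2) + 2 * IZR k * PI.
have g1 : g w1 = H - t by rewrite /g /w1 sin_periodZ sin_PI2; ring.
have g2 : g w2 = - H - t by rewrite /g /w2 sin_periodZ sin_3PI2; ring.
have Ht' : - H <= t <= H.
{ have := Rle_abs t. have := Rle_abs (- t). rewrite Rabs_Ropp. lra. }
have [z [[Hz1 Hz2] Hz]] := IVT_cor g w1 w2 Hg ltac:(rewrite /w1 /w2; lra)
   ltac:(rewrite g1 g2; nra).
exists (z / H). split.
- have E : z / H - x = (z - H * x) / H by field; apply Rgt_not_eq; lra.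
  rewrite E Rabs_div'. rewrite (Rabs_right H); last lra.
  apply Rmult_le_compat_r; first (left; apply Rinv_0_lt_compat; lra).
  apply Rabs_le. rewrite /w1 /w2 in Hz1 Hz2. lra.
- have -> : H * (z / H) = z by field; apply Rgt_not_eq; lra.
  rewrite /g in Hz. lra.
Qed.


Definition i0 {m} : 'I_m.+3 := @Ordinal m.+3 0 isT.
Definition i1 {m} : 'I_m.+3 := @Ordinal m.+3 1 isT.
Definition i2 {m} : 'I_m.+3 := @Ordinal m.+3 2 isT.

Definition P {m} (a : R) (x : Rn m.+3) : Prop := x i0 = a + ff (x i1) (x i2).
Definition liftR {m} (a : R) (z : Rn m.+3) : Rn m.+3 :=
  fun i => if i == i0 then a + ff (z i1) (z i2) else z i.
Definition lin {m} (X Y : Rn m.+3) (t : R) : Rn m.+3 := fun i => X i + t * (Y i - X i).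
Definition seg {m} a (X Y : Rn m.+3) (t : R) : Rn m.+3 := liftR a (lin X Y t).

Lemma liftR_P {m} a (z : Rn m.+3) : P a (liftR a z).
Proof. by rewrite /P /liftR /=. Qed.

Lemma liftR_ne {m} a (z : Rn m.+3) i : i != i0 -> liftR a z i = z i.
Proof. rewrite /liftR. by move=> /negbTE ->. Qed.

Lemma seg1 {m} a (X Y : Rn m.+3) t : seg a X Y t i1 = X i1 + t * (Y i1 - X i1).
Proof. by rewrite /seg /liftR /lin /=. Qed.
Lemma seg2 {m} a (X Y : Rn m.+3) t : seg a X Y t i2 = X i2 + t * (Y i2 - X i2).
Proof. by rewrite /seg /liftR /lin /=. Qed.

Lemma exists_diff {m} a (X Y : Rn m.+3) : P a X -> P a Y -> ~ pt_eq X Y ->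
  exists i, i != i0 /\ X i <> Y i.
Proof.
move=> HX HY Hne. apply: NNPP => Hn. apply: Hne => i.
case: (eqVneq i i0) => [->|Hi].
- rewrite HX HY.
  have e1 : X i1 = Y i1 by apply: NNPP => h; apply: Hn; exists i1; split.
  have e2 : X i2 = Y i2 by apply: NNPP => h; apply: Hn; exists i2; split.
  by rewrite e1 e2.
- apply: NNPP => h; apply: Hn; exists i; split => //.
Qed.

Lemma seg_arc {m} a (X Y : Rn m.+3) : P a X -> P a Y -> ~ pt_eq X Y ->
  (X i2 = Y i2 \/ (X i1 = 0 /\ Y i1 = 0)) ->
  is_arc_in (P a) X Y (seg a X Y).
Proof.
move=> HX HY Hne Hc.
split; [|split; [|split; [|split]]].
- set H := Hv (X i2).
  apply: (@cont_crit _ _ (fun i => if i == i0 then Rsqr (H * H * (Y i1 - X i1)) else Rsqr (Y i - X i))).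
  { move=> i. case: (i == i0); apply Rle_0_sqr. }
  move=> s t i. case: (eqVneq i i0) => [->|Hi].
  + rewrite /seg /liftR /lin /=.
    destruct Hc as [Hc|[Hc1 Hc2]].
    * rewrite -Hc. have E0 : forall r, X i2 + r * (X i2 - X i2) = X i2 by move=> r; ring.
      rewrite !E0.
      rewrite /ff -/H.
      have E : a + H * sin (H * (X i1 + s * (Y i1 - X i1))) - (a + H * sin (H * (X i1 + t * (Y i1 - X i1))))
        = H * (sin (H * (X i1 + s * (Y i1 - X i1))) - sin (H * (X i1 + t * (Y i1 - X i1)))) by ring.
      rewrite E -Rsqr_mult. apply Rsqr_le_abs_1.
      rewrite !Rabs_mult.
      have HH : 0 <= H by have := Hv_ge1 (X i2); rewrite -/H; lra.
      rewrite (Rabs_right H); last lra.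
      have L := sin_lip (H * (X i1 + s * (Y i1 - X i1))) (H * (X i1 + t * (Y i1 - X i1))).
      have E2 : H * (X i1 + s * (Y i1 - X i1)) - H * (X i1 + t * (Y i1 - X i1))
        = H * ((s - t) * (Y i1 - X i1)) by ring.
      rewrite E2 in L.
      rewrite !Rabs_mult (Rabs_right H) in L; last lra.
      have := Rabs_pos (s - t). have := Rabs_pos (Y i1 - X i1).
      have := Rabs_pos (sin (H * (X i1 + s * (Y i1 - X i1))) - sin (H * (X i1 + t * (Y i1 - X i1)))).
      nra.
    * rewrite Hc1 Hc2 /ff.
      have E0 : forall r, 0 + r * (0 - 0) = 0 by move=> r; ring.
      rewrite !E0.
      rewrite !Rmult_0_r sin_0 !Rmult_0_r.
      have -> : a + 0 - (a + 0) = 0 by ring.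
      rewrite Rsqr_0. apply Rmult_le_pos; apply Rle_0_sqr.
  + rewrite /seg !liftR_ne // /lin.
    have -> : X i + s * (Y i - X i) - (X i + t * (Y i - X i)) = (s - t) * (Y i - X i) by ring.
    rewrite Rsqr_mult. lra.
- move=> s t Hs Ht Heq.
  have [i [Hi Hxy]] := exists_diff _ _ _ HX HY Hne.
  have := Heq i. rewrite /seg !liftR_ne // /lin => h.
  have h' : (s - t) * (Y i - X i) = 0 by lra.
  case: (Rmult_integral _ _ h') => h2; [lra|]. exfalso; apply: Hxy; lra.
- move=> i. rewrite /seg /liftR /lin. case: (eqVneq i i0) => [->|Hi].
  + rewrite /= HX. by rewrite !Rmult_0_l !Rplus_0_r.
  + ring.
- move=> i. rewrite /seg /liftR /lin. case: (eqVneq i i0) => [->|Hi].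
  + rewrite /= HY. f_equal. f_equal; ring.
  + ring.
- move=> t _. exact: liftR_P.
Qed.


Lemma arc_mono {n} (A B : Rn n -> Prop) x y f :
  is_arc_in A x y f -> (forall t, 0 <= t <= 1 -> B (f t)) ->
  is_arc_in (fun z => A z /\ B z) x y f.
Proof. move=> [c [i [e0 [e1 s]]]] HB. do 4 (split => //). move=> t Ht; split; auto. Qed.

Lemma arc_weak {n} (A B : Rn n -> Prop) x y f :
  is_arc_in (fun z => A z /\ B z) x y f -> is_arc_in A x y f.
Proof. move=> [c [i [e0 [e1 s]]]]. do 4 (split => //). move=> t Ht; by case: (s t Ht). Qed.

Definition zero1 {m} a (X : Rn m.+3) : Rn m.+3 := liftR a (fun i => if i == i1 then 0 else X i).

Lemma zero1_1 {m} a (X : Rn m.+3) : zero1 a X i1 = 0.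
Proof. by rewrite /zero1 /liftR /=. Qed.
Lemma zero1_2 {m} a (X : Rn m.+3) : zero1 a X i2 = X i2.
Proof. by rewrite /zero1 /liftR /=. Qed.

Lemma S_arc {m} a (X Y : Rn m.+3) : P a X -> P a Y -> X i1 = 0 -> X i2 <> Y i2 ->
  exists f, is_arc_in (fun z => P a z /\ (z i1 = 0 \/ z i2 = Y i2)) X Y f.
Proof.
move=> HX HY H1 H2.
destruct (Req_dec (Y i1) 0) as [HY1|HY1].
- exists (seg a X Y). apply: arc_mono.
  + apply: seg_arc; [done|done|move=> h; apply: H2; exact: (h i2)|by right].
  + move=> t _. left. rewrite seg1 H1 HY1. ring.
- set B := zero1 a Y.
  have PB : P a B by exact: liftR_P.
  have B1 := zero1_1 a Y. have B2 := zero1_2 a Y. rewrite -/B in B1 B2.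
  exists (concat (seg a X B) (seg a B Y)).
  apply: concat_arc.
  + apply: arc_mono.
    * apply: seg_arc; [done|done|move=> h; apply: H2; rewrite -B2; exact: (h i2)|by right].
    * move=> t _. left. rewrite seg1 H1 B1. ring.
  + apply: arc_mono.
    * apply: seg_arc; [done|done|move=> h; apply: HY1; rewrite -(h i1); exact: B1|by left].
    * move=> t _. right. rewrite seg2 B2. ring.
  + move=> s t Hs Ht Heq.
    have e1 := Heq i1. rewrite !seg1 H1 B1 in e1.
    have ht : t * Y i1 = 0 by lra.
    case: (Rmult_integral _ _ ht) => [ht0|]; last by move=> h; exfalso; apply: HY1.
    have e2 := Heq i2. rewrite !seg2 B2 ht0 in e2.
    have h3 : (s - 1) * (Y i2 - X i2) = 0 by lra.
    case: (Rmult_integral _ _ h3) => h4; [lra|]. exfalso; apply: H2; lra.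
Qed.

Lemma main_arc {m} a (X Y : Rn m.+3) : P a X -> P a Y -> ~ pt_eq X Y ->
  exists f, is_arc_in (P a) X Y f.
Proof.
move=> HX HY Hne.
destruct (Req_dec (X i2) (Y i2)) as [E2|E2].
{ exists (seg a X Y). apply: seg_arc => //. by left. }
destruct (Req_dec (X i1) 0) as [E1|E1].
{ have [f Hf] := S_arc _ _ _ HX HY E1 E2. exists f. exact: arc_weak Hf. }
set A := zero1 a X.
have PA : P a A by exact: liftR_P.
have A1 := zero1_1 a X. have A2 := zero1_2 a X. rewrite -/A in A1 A2.
have [g Hg] := S_arc _ _ _ PA HY A1 ltac:(by rewrite A2).
exists (concat (seg a X A) g).
apply: concat_arc.
- apply: seg_arc; [done|done|move=> h; apply: E1; rewrite (h i1); exact: A1|by left].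
- exact: arc_weak Hg.
- move=> s t Hs Ht Heq.
  have [_ [_ [_ [_ Hin]]]] := Hg.
  case: (Hin t Ht) => _ [h|h].
  + have e1 := Heq i1. rewrite seg1 A1 h in e1.
    have h3 : (s - 1) * X i1 = 0 by lra.
    case: (Rmult_integral _ _ h3) => h4; [lra|]. by exfalso.
  + have e2 := Heq i2. rewrite seg2 A2 h in e2.
    exfalso. apply: E2. lra.
Qed.

Lemma sum_ones n : \big[Rplus/R0]_(i < n) 1 = INR n.
Proof.
rewrite big_const_ord. elim: n => [//|n IH].
change (1 + ssrnat.iter n (Rplus 1) R0 = INR n.+1). rewrite IH S_INR. lra.
Qed.

Lemma dense_P {m} a : dense (@P m a).
Proof.
move=> x eps Heps.
set N := INR m.+3.
have HN : 0 <= N by apply pos_INR.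
set rho := eps / (N + 1).
have Hrho : 0 < rho by apply Rdiv_lt_0_compat; lra.
set t := x i0 - a.
have [v [Hv1 Hv2]] := dyadic_near (x i2) rho (Rmax (Rmax 1 (Rabs t)) (14 / rho + 1)) Hrho.
set H := Hv v in Hv2.
have hm1 := Rmax_l (Rmax 1 (Rabs t)) (14 / rho + 1).
have hm2 := Rmax_r (Rmax 1 (Rabs t)) (14 / rho + 1).
have hm3 := Rmax_l 1 (Rabs t). have hm4 := Rmax_r 1 (Rabs t).
have [u [Hu1 Hu2]] := hit H t (x i1) ltac:(lra) ltac:(lra).
have Hu : Rabs (u - x i1) < rho.
{ apply Rle_lt_trans with (14 / H); first exact Hu1.
  apply Rmult_lt_reg_r with H; first lra.
  unfold Rdiv. rewrite Rmult_assoc Rinv_l; last lra.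
  have : 14 / rho < H by lra.
  move=> h. apply Rmult_lt_reg_r with (/ rho).
  { apply Rinv_0_lt_compat; lra. }
  rewrite Rmult_1_r (Rmult_comm rho) Rmult_assoc Rinv_r; last lra.
  unfold Rdiv in h. lra. }
exists (fun i => if i == i1 then u else if i == i2 then v else x i).
split.
- rewrite /P /=. rewrite /ff -/H Hu2 /t. ring.
- unfold edist.
  have Hs : \big[Rplus/R0]_(i < m.+3)
      ((x i - (if i == i1 then u else if i == i2 then v else x i)) *
       (x i - (if i == i1 then u else if i == i2 then v else x i)))
      <= Rsqr rho * \big[Rplus/R0]_(i < m.+3) 1.
  { apply: sum_le_scale => i. rewrite Rmult_1_r.
    case: (eqVneq i i1) => [->|Hi1].
    - rewrite -Rabs_Ropp Ropp_minus_distr in Hu.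
      have := Rsqr_lt_abs_1 (x i1 - u) rho. rewrite (Rabs_right rho); last lra.
      rewrite /Rsqr. move=> h. have := h Hu. lra.
    - case: (eqVneq i i2) => [->|Hi2] /=.
      + rewrite -Rabs_Ropp Ropp_minus_distr in Hv1.
        have := Rsqr_lt_abs_1 (x i2 - v) rho. rewrite (Rabs_right rho); last lra.
        rewrite /Rsqr. move=> h. have := h Hv1. lra.
      + have -> : (x i - x i) * (x i - x i) = 0 by ring.
        apply Rle_0_sqr. }
  rewrite sum_ones in Hs. rewrite -/N in Hs.
  apply Rle_lt_trans with (sqrt (Rsqr rho * N)).
  { apply sqrt_le_1_alt. exact Hs. }
  rewrite -(sqrt_Rsqr eps); [|lra].
  apply sqrt_lt_1_alt. split; first (apply Rmult_le_pos; [apply Rle_0_sqr|lra]).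
  have E : rho * (N + 1) = eps by rewrite /rho; field; apply Rgt_not_eq; lra.
  rewrite /Rsqr. nra.
Qed.


Theorem corollary1 :
  forall n : nat, (3 <= n)%nat ->
  exists P : R -> (Rn n -> Prop),
    (forall a b : R, a <> b -> forall x : Rn n, P a x -> P b x -> False) /\
    (forall x : Rn n, exists a : R, P a x) /\
    (forall a : R, arcwise_connected (P a) /\ dense (P a)).
Proof.
case=> [|[|[|m]]] Hn //.
exists (fun a => @P m a). split; [|split].
- move=> a b Hab x Ha Hb. apply: Hab. rewrite /P in Ha Hb. lra.
- move=> x. exists (x i0 - ff (x i1) (x i2)). rewrite /P. ring.
- move=> a. split; last exact: dense_P.
  split.
  + exists (liftR a (fun _ => 0)). exact: liftR_P.
  + move=> x y Hx Hy Hne. exact: main_arc.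
Qed.
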